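(* Let $k\ge 2$ and $\ell\ge 3$ be integers, and let $\Theta(k,\ell)$ be the graph consisting of two vertices $A$ and $B$ joined by $k$ internally vertex-disjoint paths, each of length $\ell$. Then $\mathrm{gp}(\Theta(k,\ell)) = k+1$.
   Context: All graphs are finite, simple and connected. A geodesic is a shortest path between its end-vertices. A set $S$ of vertices of a graph $G$ is a general position set if no three vertices of $S$ lie on a common geodesic of $G$ (i.e., there are no distinct $x,y,z\in S$ with $d_G(x,z)=d_G(x,y)+d_G(y,z)$). The general position number $\mathrm{gp}(G)$ is the maximum cardinality of a general position set of $G$. *)

(* Defs.v *)
From mathcomp Require Import all_boot.
Set Implicit Arguments. Unset Strict Implicit. Unset Printing Implicit Defensive.

Section Graph.
Variables (T : finType) (e : rel T).

Fixpoint ballg (n : nat) (x : T) : {set T} :=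
  match n with
  | 0 => [set x]
  | n'.+1 => ballg n' x :|: [set y | [exists z in ballg n' x, e z y]]
  end.

(* shortest-path distance: least n with y within n steps of x
   (for connected graphs on T this is always < #|T|; unreachable -> #|T|) *)
Definition gdist (x y : T) : nat := find (fun n => y \in ballg n x) (iota 0 #|T|).

Definition gp_set (S : {set T}) : bool :=
  [forall x in S, forall y in S, forall z in S,
     [&& x != y, y != z & x != z] ==> (gdist x z != gdist x y + gdist y z)].

Definition gp : nat := \max_(S : {set T} | gp_set S) #|S|.
End Graph.

(* Theta(k,l): vertices A = inl false, B = inl true, and for path i < k the
   internal vertex at distance j+1 from A is inr (i, j), j < l-1. *)
Definition theta_V (k l : nat) : finType := (bool + ('I_k * 'I_l.-1))%type.

Definition theta_adj (k l : nat) : rel (theta_V k l) :=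
  fun x y =>
  match x, y with
  | inl a, inr (i, j) | inr (i, j), inl a => if a then (nat_of_ord j).+2 == l else nat_of_ord j == 0
  | inr (i, j), inr (i', j') => (i == i') && (((nat_of_ord j).+1 == nat_of_ord j') || ((nat_of_ord j').+1 == nat_of_ord j))
  | inl _, inl _ => false
  end.

(* Main.v *)
Require Import Defs.
From mathcomp Require Import all_boot zify.
Set Implicit Arguments. Unset Strict Implicit. Unset Printing Implicit Defensive.




Lemma absl p q : p <= q -> p - q + (q - p) = q - p.
Proof. lia. Qed.
Lemma absr p q : q <= p -> p - q + (q - p) = p - q.
Proof. lia. Qed.

Lemma three_arith a c d : 0 < a - c + (c - a) -> 0 < c - d + (d - c) -> 0 < a - d + (d - a) ->
  a - d + (d - a) <> a - c + (c - a) + (c - d + (d - c)) ->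
  c - d + (d - c) <> c - a + (a - c) + (a - d + (d - a)) ->
  a - c + (c - a) <> a - d + (d - a) + (d - c + (c - d)) -> False.
Proof.
move=> p1 p2 p3.
have n1 : a != c by lia.
have n2 : c != d by lia.
have n3 : a != d by lia.
clear p1 p2 p3.
case: (leqP a c) => h1; [rewrite (absl h1) (absr h1)|rewrite (absr (ltnW h1)) (absl (ltnW h1))];
case: (leqP c d) => h2; try rewrite (absl h2) (absr h2); try rewrite (absr (ltnW h2)) (absl (ltnW h2));
case: (leqP a d) => h3; try rewrite (absl h3) (absr h3); try rewrite (absr (ltnW h3)) (absl (ltnW h3));
lia.
Qed.



Lemma four_arith m a1 a2 b1 b2 : a1 < a2 -> b1 < b2 -> a2 < m.+2 -> b2 < m.+2 ->
  minn (a1 + b2 + 2) (2 * m + 4 - a1 - b2) <>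
    a1 - a2 + (a2 - a1) + minn (a2 + b2 + 2) (2 * m + 4 - a2 - b2) ->
  minn (b2 + a1 + 2) (2 * m + 4 - b2 - a1) <>
    b2 - b1 + (b1 - b2) + minn (b1 + a1 + 2) (2 * m + 4 - b1 - a1) -> False.
Proof.
move=> l1 l2 h1 h2.
case: (leqP (a1 + b2 + 2) m.+3) => h.
- have e1 : minn (b2 + a1 + 2) (2 * m + 4 - b2 - a1) = b2 + a1 + 2 by apply/minn_idPl; lia.
  have e2 : minn (b1 + a1 + 2) (2 * m + 4 - b1 - a1) = b1 + a1 + 2 by apply/minn_idPl; lia.
  move=> _ t2; apply: t2; rewrite e1 e2 (absr (ltnW l2)); lia.
- have e3 : minn (a1 + b2 + 2) (2 * m + 4 - a1 - b2) = 2 * m + 4 - a1 - b2 by apply/minn_idPr; lia.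
  have e4 : minn (a2 + b2 + 2) (2 * m + 4 - a2 - b2) = 2 * m + 4 - a2 - b2 by apply/minn_idPr; lia.
  move=> t1 _; apply: t1; rewrite e3 e4 (absl (ltnW l1)); lia.
Qed.

Lemma ballg_char (T : finType) (e : rel T) (D : T -> T -> nat) x :
  D x x = 0 -> (forall y, D x y = 0 -> y = x) ->
  (forall z y, e z y -> D x y <= (D x z).+1) ->
  (forall y, 0 < D x y -> exists z, e z y /\ (D x z).+1 = D x y) ->
  forall n y, (y \in ballg e n x) = (D x y <= n).
Proof.
move=> H0 H1 H2 H3; elim=> [|n IH] y /=.
  rewrite inE leqn0; apply/eqP/eqP => [->//|]; exact: H1.
rewrite !inE IH; apply/idP/idP.
  case/orP => [h|/existsP[z /andP[]]]; first by lia.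
  rewrite IH => hz /H2; lia.
rewrite leq_eqVlt ltnS orbC; case/orP => [->//|/eqP hy].
have [z [ez hz]] := H3 y (ltac:(lia)).
apply/orP; right; apply/existsP; exists z; rewrite IH ez; lia.
Qed.

Lemma gdist_char (T : finType) (e : rel T) (D : T -> T -> nat) x y :
  (forall n, (y \in ballg e n x) = (D x y <= n)) -> D x y < #|T| ->
  gdist e x y = D x y.
Proof.
move=> H hlt; rewrite /gdist.
have ->: iota 0 #|T| = iota 0 (D x y) ++ D x y :: iota (D x y).+1 (#|T| - (D x y).+1).
  have h1 : #|T| - D x y = (#|T| - (D x y).+1).+1 by lia.
  by rewrite -[_ :: _]/(iota (D x y) (#|T| - (D x y).+1).+1) -h1 -iotaD subnKC // ltnW.
rewrite find_cat size_iota.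
have ->: has (fun n => y \in ballg e n x) (iota 0 (D x y)) = false.
  apply/hasPn => i; rewrite mem_iota H /=; lia.
by rewrite /= H leqnn addn0.
Qed.

Section Th.
Variables n m : nat.
Local Notation T := (theta_V n.+2 m.+3).
Local Notation e := (@theta_adj n.+2 m.+3).

Definition pos (x : T) : nat :=
  match x with inl b => if b then m.+3 else 0 | inr (_, j) => (nat_of_ord j).+1 end.
Definition D (x y : T) : nat :=
  match x, y with
  | inr (i, j), inr (i', j') =>
      if i == i' then (j - j') + (j' - j) else minn (j + j' + 2) (2*m + 4 - j - j')
  | _, _ => (pos x - pos y) + (pos y - pos x) end.

Ltac addb := repeat match goal with
  | j : _ |- _ => lazymatch goal with
      | _ : is_true (nat_of_ord j < _) |- _ => fail
      | _ => have := @ltn_ord _ j; intro end end.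

Lemma D0 x : D x x = 0.
Proof. case: x => [[]|[i j]] /=; rewrite ?eqxx; lia. Qed.

Lemma D0E x y : D x y = 0 -> y = x.
Proof.
case: x => [a|[i j]]; case: y => [b|[i' j']] /=; addb; simpl in *.
- by case: a; case: b => //=; lia.
- by case: a => /=; lia.
- by case: b => /=; lia.
- case: (eqVneq i i') => [<-|_] h; last lia.
  by congr (inr (_, _)); apply: val_inj => /=; lia.
Qed.


Ltac caseq := repeat match goal with
  | |- context [?u == ?v] => case: (eqVneq u v) => [?|?]; try subst
  end.

Lemma D_edge x z y : e z y -> D x y <= (D x z).+1.
Proof.
case: x => [a|[i j]]; case: z => [b|[i2 j2]]; case: y => [c|[i3 j3]] => //=; addb; simpl in *;
  try (case: a); try (case: b); try (case: c); simpl;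
  try (move=> /andP[/eqP ? ?]; subst); try (move=> ?); caseq; lia.
Qed.


Lemma mkord (v : nat) : v <= m.+1 -> exists z : 'I_m.+2, nat_of_ord z = v.
Proof. by move=> h; exists (inord v); rewrite inordK. Qed.

Ltac fin := split; rewrite /= ?eqxx /=; caseq;
  try (by match goal with H : is_true (?u != ?u) |- _ => rewrite eqxx in H end); lia.

Lemma D_pred x y : 0 < D x y -> exists z, e z y /\ (D x z).+1 = D x y.
Proof.
case: x => [a|[i j]]; case: y => [c|[i' q]]; addb; simpl in *.
- case: a; case: c => /= h; try lia.
  + by exists (inr (ord0, ord0)); fin.
  + by exists (inr (ord0, ord_max)); fin.
- case: a => /= h.
  + case: (eqVneq (nat_of_ord q) m.+1) => hq.
    * by exists (inl true); fin.
    * have [z hz] := @mkord q.+1 (ltac:(lia)).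
      by exists (inr (i', z)); fin.
  + case: (eqVneq (nat_of_ord q) 0) => hq.
    * by exists (inl false); fin.
    * have [z hz] := @mkord q.-1 (ltac:(lia)).
      by exists (inr (i', z)); fin.
- case: c => /= h.
  + by exists (inr (i, ord_max)); fin.
  + by exists (inr (i, ord0)); fin.
- case: (eqVneq i i') => [<-|hi] h.
  + case: (ltnP j q) => hjq.
    * have [z hz] := @mkord q.-1 (ltac:(lia)).
      by exists (inr (i, z)); fin.
    * have [z hz] := @mkord q.+1 (ltac:(lia)).
      by exists (inr (i, z)); fin.
  + case: (leqP (j + q + 2) m.+3) => hjq.
    * case: (eqVneq (nat_of_ord q) 0) => hq.
      -- by exists (inl false); fin.
      -- have [z hz] := @mkord q.-1 (ltac:(lia)).
         by exists (inr (i', z)); fin.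
    * case: (eqVneq (nat_of_ord q) m.+1) => hq.
      -- by exists (inl true); fin.
      -- have [z hz] := @mkord q.+1 (ltac:(lia)).
         by exists (inr (i', z)); fin.
Qed.


Lemma cardT : #|T| = (n.+2 * m.+2).+2.
Proof. by rewrite card_sum card_bool card_prod !card_ord. Qed.

Lemma gdistE x y : gdist e x y = D x y.
Proof.
apply: gdist_char.
  move=> k; apply: ballg_char; [exact: D0|exact: D0E|exact: D_edge|exact: D_pred].
rewrite cardT.
case: x => [a|[i j]]; case: y => [c|[i' q]]; addb; simpl in *;
  try (case: a); try (case: c); simpl; caseq; lia.
Qed.

Lemma Dpos x y : x != y -> 0 < D x y.
Proof. move=> h; rewrite lt0n; apply/negP => /eqP /D0E hy; by rewrite hy eqxx in h. Qed.

Lemma tri S x y z : gp_set e S -> x \in S -> y \in S -> z \in S ->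
  x != y -> y != z -> x != z ->
  D x z <> D x y + D y z /\ 0 < D x y /\ 0 < D y z /\ 0 < D x z.
Proof.
move=> /forall_inP/(_ x) H hx hy hz hxy hyz hxz.
move: (H hx) => /forall_inP/(_ y hy)/forall_inP/(_ z hz)/implyP.
rewrite hxy hyz hxz !gdistE => /(_ isT) /eqP h.
by split=> //; rewrite !Dpos.
Qed.

Definition g (x : T) : option 'I_n.+2 :=
  match x with inl _ => None | inr (i, _) => Some i end.

Lemma card_bound (S : {set T}) s0 :
  (forall x, x \in S -> x != s0 -> g x != None) ->
  {in S &, forall x y, x != s0 -> y != s0 -> g x = g y -> x = y} ->
  #|S| <= n.+3.
Proof.
move=> H1 H2.
pose f x := if x == s0 then None else g x.
have inj : {in S &, injective f}.
  move=> x y hx hy; rewrite /f.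
  case: (eqVneq x s0) => [->|hxs]; case: (eqVneq y s0) => [->|hys] //.
  - by move=> h; move: (H1 _ hy hys); rewrite -h.
  - by move=> h; move: (H1 _ hx hxs); rewrite h.
  - exact: H2.
rewrite -(card_in_imset inj); apply: leq_trans (max_card _) _.
by rewrite card_option card_ord.
Qed.


Ltac kill := try (by match goal with H : is_true (?u != ?u) |- _ => rewrite eqxx in H end).

Lemma ne_inr i i' (a b : 'I_m.+2) :
  (i != i') || (nat_of_ord a != b) -> (inr (i, a) : T) != inr (i', b).
Proof. move=> h; apply/negP => /eqP [e1 e2]; subst; by rewrite !eqxx in h. Qed.

Ltac neq := apply: ne_inr; apply/orP;
  first [ left; (by []) || (by rewrite eq_sym) | right; lia ].

Lemma four (S : {set T}) i i' (a1 a2 b1 b2 : 'I_m.+2) : gp_set e S -> i != i' ->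
  inr (i, a1) \in S -> inr (i, a2) \in S -> inr (i', b1) \in S -> inr (i', b2) \in S ->
  a1 < a2 -> b1 < b2 -> False.
Proof.
move=> gS hi h1 h2 h3 h4 l1 l2.
have := tri gS h1 h2 h4 (ltac:(neq)) (ltac:(neq)) (ltac:(neq)).
have := tri gS h4 h3 h1 (ltac:(neq)) (ltac:(neq)) (ltac:(neq)).
addb; simpl in *; rewrite !eqxx (negbTE hi) eq_sym (negbTE hi).
move=> [t2 _] [t1 _]; exact: (four_arith l1 l2 (ltn_ord a2) (ltn_ord b2) t1 t2).
Qed.

Ltac sy := first [done | by rewrite eq_sym].

Lemma upper (S : {set T}) : gp_set e S -> #|S| <= n.+3.
Proof.
move=> gS.
case: (boolP (inl false \in S)) => hA; case: (boolP (inl true \in S)) => hB.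
- have sub : S \subset [set inl false; inl true].
    apply/subsetP => x hx; rewrite !inE.
    case: x hx => [[]|[i j]] hx //=.
    have := tri gS hA hx hB isT isT isT; simpl; addb; simpl in *; lia.
  apply: leq_trans (subset_leq_card sub) _; rewrite cards2; by case: (_ != _).
- apply: (@card_bound _ (inl false)).
    by move=> [[]|[i j]] hx //=; rewrite hx in hB.
  move=> [[]|[i j]] [[]|[i' j']] hx hy //=; try (by rewrite hx in hB); try (by rewrite hy in hB).
  move=> _ _ [hi]; subst i'; apply/eqP/negPn/negP => hxy.
  have := tri gS hA hx hy isT hxy isT.
  have := tri gS hA hy hx isT (ltac:(by rewrite eq_sym)) isT.
  simpl; addb; simpl in *; rewrite eqxx; lia.
- apply: (@card_bound _ (inl true)).
    by move=> [[]|[i j]] hx //=; rewrite hx in hA.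
  move=> [[]|[i j]] [[]|[i' j']] hx hy //=; try (by rewrite hx in hA); try (by rewrite hy in hA).
  move=> _ _ [hi]; subst i'; apply/eqP/negPn/negP => hxy.
  have := tri gS hB hx hy isT hxy isT.
  have := tri gS hB hy hx isT (ltac:(by rewrite eq_sym)) isT.
  simpl; addb; simpl in *; rewrite eqxx; lia.
- case: (boolP [exists x in S, exists y in S, (x != y) && (g x == g y)]).
  + move=> /exists_inP [x hx /exists_inP [y hy /andP [hxy /eqP gxy]]].
    apply: (@card_bound _ x).
      move=> [[]|[i j]] hz //= _; [by rewrite hz in hB|by rewrite hz in hA].
    move=> u v hu hv hux hvx guv; apply/eqP/negPn/negP => huv.
    case: x hx hxy gxy hux hvx => [[]|[i a]] hx; try (by rewrite hx in hA); try (by rewrite hx in hB).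
    case: y hy => [[]|[i2 b]] hy; try (by rewrite hy in hA); try (by rewrite hy in hB).
    move=> hxy [gi]; subst i2.
    case: u hu huv guv => [[]|[i3 c]] hu; try (by rewrite hu in hA); try (by rewrite hu in hB).
    case: v hv => [[]|[i4 d]] hv; try (by rewrite hv in hA); try (by rewrite hv in hB).
    move=> huv [gi]; subst i4 => hux hvx.
    case: (eqVneq i i3) => [ei|ni].
      subst i3.
      have := tri gS hx hu hv (ltac:(sy)) (ltac:(sy)) (ltac:(sy)).
      have := tri gS hu hx hv (ltac:(sy)) (ltac:(sy)) (ltac:(sy)).
      have := tri gS hx hv hu (ltac:(sy)) (ltac:(sy)) (ltac:(sy)).
      addb; simpl in *; rewrite !eqxx.
      move=> [t3 _] [t2 _] [t1 [p1 [p2 p3]]]; exact: (three_arith p1 p2 p3 t1 t2 t3).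
    have hab : nat_of_ord a != b.
      by apply: contra hxy => /eqP hab0; apply/eqP; congr (inr (_, _)); apply: val_inj.
    have hcd : nat_of_ord c != d.
      by apply: contra huv => /eqP hab0; apply/eqP; congr (inr (_, _)); apply: val_inj.
    case: (ltngtP a b) => lab; last (by rewrite lab eqxx in hab);
    case: (ltngtP c d) => lcd; try (by rewrite lcd eqxx in hcd).
    * exact: (four gS ni hx hy hu hv).
    * exact: (four gS ni hx hy hv hu).
    * exact: (four gS ni hy hx hu hv).
    * exact: (four gS ni hy hx hv hu).
  + rewrite negb_exists_in => /forall_inP hno.
    apply: (@card_bound _ (inl false)).
      by move=> [[]|[i j]] hz //= _; rewrite hz in hB.
    move=> x y hx hy _ _ gxy; apply/eqP/negPn/negP => hxy.
    by move: (hno x hx); rewrite negb_exists_in => /forall_inP/(_ y hy); rewrite hxy gxy eqxx.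
Qed.

Definition S0 : {set T} := inl true |: [set (inr (i, ord0) : T) | i : 'I_n.+2].

Lemma lower : gp_set e S0 /\ #|S0| = n.+3.
Proof.
split.
  apply/forall_inP => x hx; apply/forall_inP => y hy; apply/forall_inP => z hz.
  apply/implyP => /and3P[hxy hyz hxz]; rewrite !gdistE.
  move: hx hy hz hxy hyz hxz; rewrite !inE.
  case/orP => [/eqP->|/imsetP[i _ ->]]; case/orP => [/eqP->|/imsetP[i2 _ ->]];
  case/orP => [/eqP->|/imsetP[i3 _ ->]]; rewrite ?eqxx //= => h1 h2 h3;
  apply/eqP; caseq; kill; lia.
rewrite cardsU1 card_imset ?card_ord; last by move=> i j [].
case: imsetP => //; by case.
Qed.

End Th.

Theorem proposition2p1 (k l : nat) :
  2 <= k -> 3 <= l -> gp (@theta_adj k l) = k.+1.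
Proof.
case: k => [|[|n]] // _; case: l => [|[|[|m]]] // _.
have [g0 c0] := lower n m.
rewrite /gp; apply/eqP; rewrite eqn_leq; apply/andP; split.
  by apply/bigmax_leqP => S; apply: upper.
rewrite -c0; exact: (leq_bigmax_cond _ g0).
Qed.
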